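(* Let $\lambda,N,t,m,v$ be positive integers with $t\ge 2$ and $t\le m(t-1)$. There exists an $OCA_{\lambda}(N;t,m,t,v)$ if and only if there exists an $OCA_{\lambda}(N;t,m,t-1,v)$.
   Context: For positive integers $m,s$, the RT poset $[m\times s]$ is the set $\{1,\ldots,ms\}$ partitioned into $m$ blocks $B_i=\{is+1,\ldots,(i+1)s\}$ ($i=0,\ldots,m-1$); each block is a chain under the usual order of the integers, and elements of different blocks are incomparable. An ideal is a subset $I$ such that $b\in I$ and $a\preceq b$ imply $a\in I$; an anti-ideal is the complement of an ideal. Given an $N\times n$ array over an alphabet $V$ of size $v$, a set of $t$ columns is $\lambda$-covered if in the $N\times t$ subarray formed by those columns every $t$-tuple over $V$ appears as a row at least $\lambda$ times. For positive integers with $2\le t\le ms$, an ordered covering array $OCA_{\lambda}(N;t,m,s,v)$ is an $N\times ms$ array over an alphabet of size $v$ whose columns are labeled by the elements of $[m\times s]$, such that for every anti-ideal $J$ of size $t$ the set of columns labeled by $J$ is $\lambda$-covered. *)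

(* Defs.v *)
From mathcomp Require Import all_boot all_order all_algebra.
Set Implicit Arguments. Unset Strict Implicit. Unset Printing Implicit Defensive.

(* The RT poset [m x s] is modelled on 'I_(m*s) = {0,...,ms-1}
   (element k stands for k+1 of the paper); block B_i = {i*s, ..., (i+1)*s - 1},
   i.e. a and b lie in the same block iff a %/ s = b %/ s. *)
Definition rt_le (m s : nat) (a b : 'I_(m * s)) : bool :=
  (a %/ s == b %/ s) && (a <= b).

Definition rt_ideal (m s : nat) (I : {set 'I_(m * s)}) : Prop :=
  forall a b : 'I_(m * s), b \in I -> rt_le a b -> a \in I.

Definition rt_anti_ideal (m s : nat) (J : {set 'I_(m * s)}) : Prop :=
  rt_ideal (~: J).

(* The columns in C are lambda-covered by the N x n array A over alphabet 'I_v: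
   every tuple of values on the columns of C (a map C -> 'I_v, represented by a
   function on all columns whose values outside C are irrelevant) appears as a row
   of the subarray at least lambda times. *)
Definition lambda_covered (lam N n v : nat) (A : 'M['I_v]_(N, n))
    (C : {set 'I_n}) : Prop :=
  forall f : {ffun 'I_n -> 'I_v},
    lam <= #|[set r : 'I_N | [forall c in C, A r c == f c]]|.
Arguments lambda_covered : clear implicits.

Definition OCA (lam N t m s v : nat) (A : 'M['I_v]_(N, m * s)) : Prop :=
  2 <= t <= m * s /\
  forall J : {set 'I_(m * s)}, rt_anti_ideal J -> #|J| = t ->
    lambda_covered lam N (m * s) v A J.
Arguments OCA : clear implicits.

(* Main.v *)
Require Import Defs.
From mathcomp Require Import all_boot all_order all_algebra.
From mathcomp Require Import zify.
Set Implicit Arguments. Unset Strict Implicit.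

Lemma mk_lt m S q r : q < m -> r < S -> q * S + r < m * S.
Proof. move=> h1 h2; nia. Qed.

Lemma S_pos m S (a : 'I_(m * S)) : 0 < S.
Proof. case: S a => [|S] [x] //=; by rewrite muln0. Qed.

Lemma ord_q m S (a : 'I_(m * S)) : a %/ S < m.
Proof. by rewrite ltn_divLR ?(S_pos a) // ltn_ord. Qed.

Lemma ord_r m S (a : 'I_(m * S)) : a %% S < S.
Proof. by rewrite ltn_pmod // (S_pos a). Qed.

Lemma mkdiv q S r : r < S -> (q * S + r) %/ S = q.
Proof. move=> h; rewrite divnMDl ?divn_small ?addn0 //; lia. Qed.

Lemma mkmod q S r : r < S -> (q * S + r) %% S = r.
Proof. move=> h; by rewrite modnMDl modn_small. Qed.

Lemma ord_eq m S (a b : 'I_(m * S)) : a %/ S = b %/ S -> a %% S = b %% S -> a = b.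
Proof. move=> h1 h2; apply: val_inj => /=; by rewrite (divn_eq a S) (divn_eq b S) h1 h2. Qed.

Lemma le_same S (a b : nat) : a %/ S = b %/ S -> (a <= b) = (a %% S <= b %% S).
Proof. move=> h; rewrite [in X in X = _](divn_eq a S) [in X in X = _](divn_eq b S) h. by rewrite leq_add2l. Qed.

Lemma cover_transfer lam N n n' v (A : 'M['I_v]_(N, n)) (B : 'M['I_v]_(N, n'))
  (g : 'I_n -> 'I_n') (C : {set 'I_n}) : 0 < v ->
  (forall r c, A r c = B r (g c)) -> {in C &, injective g} ->
  lambda_covered lam N n' v B (g @: C) -> lambda_covered lam N n v A C.
Proof.
move=> hv hAB ginj hB f.
pose f' := [ffun c' => if [pick c in C | g c == c'] is Some c then f c else Ordinal hv].
apply: leq_trans (hB f') _; apply: subset_leq_card; apply/subsetP => r.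
rewrite !inE => /forallP H; apply/forallP => c; apply/implyP => cC.
have := H (g c); rewrite imset_f // implyTb hAB ffunE.
case: pickP => [c0 /andP[c0C /eqP e]|/(_ c)]; last by rewrite cC eqxx.
by rewrite (ginj _ _ c0C cC e).
Qed.

Lemma anti_upP S m (J : {set 'I_(m * S)}) :
  rt_anti_ideal J <-> (forall a b, a \in J -> rt_le a b -> b \in J).
Proof.
split => H a b.
- move=> aJ ab; apply/negPn/negP => bn.
  by move: (H a b); rewrite !inE => /(_ bn ab); rewrite aJ.
- rewrite !inE => bJ ab; apply/negP => aJ; move: bJ; by rewrite (H _ _ aJ ab).
Qed.

Definition phi m s (a : 'I_(m * s)) : 'I_(m * s.+1) :=
  Ordinal (mk_lt (ord_q a) (ord_r a : (a %% s).+1 < s.+1)).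

Lemma phi_q m s (a : 'I_(m * s)) : phi a %/ s.+1 = a %/ s.
Proof. by rewrite /= mkdiv // ltnS ord_r. Qed.
Lemma phi_r m s (a : 'I_(m * s)) : phi a %% s.+1 = (a %% s).+1.
Proof. by rewrite /= mkmod // ltnS ord_r. Qed.

Lemma phi_inj m s : injective (@phi m s).
Proof.
move=> a b e; apply: ord_eq.
  by have := congr1 (fun x : 'I__ => x %/ s.+1) e; rewrite /= !phi_q.
by have := congr1 (fun x : 'I__ => x %% s.+1) e; rewrite /= !phi_r => -[].
Qed.

Lemma dir1 lam N s m v (A : 'M['I_v]_(N, m * s.+1)) : 0 < v -> s.+1 <= m * s ->
  OCA lam N s.+1 m s.+1 v A -> OCA lam N s.+1 m s v (\matrix_(r, c) A r (phi c)).
Proof.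
move=> hv hsm [_ HA].
have s0 : 0 < s by move: hsm; case: (s) => //; rewrite muln0.
split; first by rewrite ltnS s0 hsm.
move=> J aJ cJ.
have up := (anti_upP J).1 aJ.
apply: (cover_transfer (g := @phi m s) (B := A)) => //.
- by move=> r c; rewrite mxE.
- by move=> x y _ _; apply: phi_inj.
apply: HA; last by rewrite card_imset //; exact: phi_inj.
apply/anti_upP => x y /imsetP[a aJ0 ->] /andP[/eqP hq hle].
have hr : (phi a %% s.+1 <= y %% s.+1) by rewrite -le_same.
have y0 : 0 < y %% s.+1 by move: hr; rewrite phi_r; case: (y %% s.+1).
have hbq : y %/ s.+1 < m := ord_q y.
have hbr : (y %% s.+1).-1 < s by rewrite -ltnS prednK // ord_r.
pose b := Ordinal (mk_lt hbq hbr) : 'I_(m * s).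
have bq : b %/ s = y %/ s.+1 by rewrite /= mkdiv.
have br : b %% s = (y %% s.+1).-1 by rewrite /= mkmod.
have e : phi b = y.
  by apply: ord_eq; rewrite ?phi_q ?phi_r ?bq ?br ?prednK.
rewrite -e imset_f //; apply: (up a) => //.
apply/andP; split; first by rewrite bq -hq phi_q.
rewrite (le_same (S := s)); last by rewrite bq -hq phi_q.
by rewrite br -ltnS prednK // -phi_r.
Qed.

Lemma pr_lt m s (y : 'I_(m * s.+1)) : 0 < s -> (y %% s.+1).-1 < s.
Proof. move: (ord_r y); case: (y %% s.+1) => //. Qed.

Lemma pred_lt s : 0 < s -> s.-1 < s.
Proof. by rewrite ltn_predL. Qed.

Definition g m s (hm : 0 < m) (hs : 0 < s) (y : 'I_(m * s.+1)) : 'I_(m * s) :=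
  if 0 < y %% s.+1 then Ordinal (mk_lt (ord_q y) (pr_lt y hs))
  else Ordinal (mk_lt (ltn_pmod (y %/ s.+1).+1 hm) (pred_lt hs)).

Lemma g_q m s hm hs (y : 'I_(m * s.+1)) :
  @g m s hm hs y %/ s = if 0 < y %% s.+1 then y %/ s.+1 else (y %/ s.+1).+1 %% m.
Proof. by rewrite /g; case: ifP => _ /=; rewrite mkdiv // ?pr_lt ?pred_lt. Qed.

Lemma g_r m s hm hs (y : 'I_(m * s.+1)) :
  @g m s hm hs y %% s = if 0 < y %% s.+1 then (y %% s.+1).-1 else s.-1.
Proof. by rewrite /g; case: ifP => _ /=; rewrite mkmod // ?pr_lt ?pred_lt. Qed.

Lemma dir2 lam N s m v (hm : 0 < m) (hs : 0 < s) (B : 'M['I_v]_(N, m * s)) :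
  0 < v -> s.+1 <= m * s ->
  OCA lam N s.+1 m s v B -> OCA lam N s.+1 m s.+1 v (\matrix_(r, c) B r (g hm hs c)).
Proof.
move=> hv hsm [_ HB].
have m2 : 1 < m by move: hsm; case: (m) hm => [|[|m']] //; rewrite mul1n ltnn.
split.
  rewrite ltnS hs /=; apply: leq_trans hsm _; by rewrite leq_mul2l ltnW ?orbT.
move=> J aJ cJ.
have up := (anti_upP J).1 aJ.
case: (boolP [forall y in J, 0 < y %% s.+1]) => [/forall_inP Hpos | /forall_inPn [y0 y0J y0n]].
- have ginj : {in J &, injective (g hm hs)}.
    move=> a b aJ0 bJ0 e.
    have h1 := congr1 (fun x : 'I__ => x %/ s) e.
    have h2 := congr1 (fun x : 'I__ => x %% s) e.
    move: h1 h2 => /=; rewrite !g_q !g_r (Hpos a aJ0) (Hpos b bJ0) => hq hr.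
    apply: ord_eq => //.
    move: (Hpos a aJ0) (Hpos b bJ0) hr; move: (a %% s.+1) (b %% s.+1) => x y; lia.
  apply: (cover_transfer (g := g hm hs) (B := B) hv); first by move=> r c; rewrite mxE.
    exact: ginj.
  apply: HB; last by rewrite card_in_imset.
  apply/anti_upP => x z /imsetP[a aJ0 ->] /andP[/eqP hq hle].
  have ha := Hpos a aJ0.
  have hr : g hm hs a %% s <= z %% s by rewrite -(le_same hq).
  rewrite g_q ha in hq; rewrite g_r ha in hr.
  have e : g hm hs (phi z) = z.
    by apply: ord_eq; rewrite ?g_q ?g_r phi_r /= ?phi_q.
  rewrite -e imset_f //; apply: (up a) => //; apply/andP; split.
    by rewrite phi_q hq.
  rewrite (le_same (S := s.+1)) ?phi_q ?hq // phi_r.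
  move: ha hr; move: (a %% s.+1) (z %% s) => x1 y1; lia.
have y0r : y0 %% s.+1 = 0 by move: y0n; rewrite lt0n negbK => /eqP.
set q0 := y0 %/ s.+1.
have hq0 : q0 < m := ord_q y0.
have Jblk : forall y : 'I_(m * s.+1), (y \in J) = (y %/ s.+1 == q0).
  pose blk := [set y : 'I_(m * s.+1) | y %/ s.+1 == q0].
  have sub : blk \subset J.
    apply/subsetP => y; rewrite inE => /eqP hy; apply: (up y0) => //.
    apply/andP; split; first by rewrite hy.
    by rewrite (le_same (S := s.+1)) ?hy // y0r.
  have cblk : #|blk| = s.+1.
    have -> : blk = (fun r : 'I_s.+1 => Ordinal (mk_lt hq0 (ltn_ord r))) @: setT.
      apply/setP => y; rewrite inE; apply/eqP/imsetP => [hy|[r _ ->]]; last by rewrite /= mkdiv.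
      exists (Ordinal (ord_r y)) => //; apply: ord_eq; rewrite /= ?mkdiv ?mkmod ?ord_r //.
    rewrite card_imset ?cardsT ?card_ord //.
    move=> r1 r2 /(congr1 (fun x : 'I__ => x %% s.+1)); rewrite /= !mkmod // => h.
    exact: val_inj.
  have /eqP <- : blk == J by rewrite eqEcard sub cJ cblk /=.
  by move=> y; rewrite inE.
set q' := (q0.+1) %% m.
have hne : q' != q0.
  rewrite /q'; case: (ltnP q0.+1 m) => h.
    rewrite modn_small //; apply/eqP; lia.
  have -> : q0.+1 = m by lia.
  rewrite modnn; apply/eqP; lia.
have ginj : {in J &, injective (g hm hs)}.
  move=> a b aJ0 bJ0 e.
  have qa : a %/ s.+1 = q0 by apply/eqP; rewrite -Jblk.
  have qb : b %/ s.+1 = q0 by apply/eqP; rewrite -Jblk.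
  apply: ord_eq; first by rewrite qa qb.
  have h1 := congr1 (fun x : 'I__ => x %/ s) e.
  have h2 := congr1 (fun x : 'I__ => x %% s) e.
  move: h1 h2 => /=; rewrite !g_q !g_r qa qb -/q'.
  move: (a %% s.+1) (b %% s.+1) => ra rb.
  case: (posnP ra) => [->|pa]; case: (posnP rb) => [->|pb] //=.
  - by move=> /eqP; rewrite (negbTE hne).
  - by move=> /eqP; rewrite eq_sym (negbTE hne).
  - move=> _; lia.
apply: (cover_transfer (g := g hm hs) (B := B) hv); first by move=> r c; rewrite mxE.
  exact: ginj.
apply: HB; last by rewrite card_in_imset.
apply/anti_upP => x z /imsetP[a aJ0 ->] /andP[/eqP hq hle].
have qa : a %/ s.+1 = q0 by apply/eqP; rewrite -Jblk.
have hr : g hm hs a %% s <= z %% s by rewrite -(le_same hq).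
case: (posnP (a %% s.+1)) => [ra0|pa].
- rewrite g_r ra0 /= in hr.
  have -> : z = g hm hs a.
    apply: ord_eq; first by rewrite hq.
    rewrite g_r ra0 /=; have := ord_r z; move: hr; move: (z %% s) => k; lia.
  by rewrite imset_f.
- rewrite g_q pa qa in hq.
  have e : g hm hs (phi z) = z.
    by apply: ord_eq; rewrite ?g_q ?g_r phi_r /= ?phi_q.
  by rewrite -e imset_f // Jblk phi_q hq.
Qed.

Theorem corollary1 (lam N t m v : nat) :
  0 < lam -> 0 < N -> 0 < t -> 0 < m -> 0 < v ->
  2 <= t -> t <= m * (t - 1) ->
  (exists A : 'M['I_v]_(N, m * t), OCA lam N t m t v A) <->
  (exists A : 'M['I_v]_(N, m * (t - 1)), OCA lam N t m (t - 1) v A).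
Proof.
move=> hl hN ht hm hv.
case: t ht => [|s] // _ t2.
have -> : s.+1 - 1 = s by rewrite subn1.
move=> htm.
have hs : 0 < s by [].
split => [[A HA]|[B HB]].
- by eexists; apply: dir1 HA.
- by eexists; apply: (dir2 hm hs) HB.
Qed.
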